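(* Let $\mathbf{T}$ be a totally ordered set, $\Bbbk$ a field, and let $F:\mathbb{U}\to\mathbb{V}$, $G:\mathbb{T}'\to\mathbb{W}$, $\varphi_1:\mathbb{T}'\to\mathbb{U}$, $\varphi_2:\mathbb{V}\to\mathbb{W}$ be homomorphisms of pointwise finite-dimensional $\mathbf{T}$-persistence modules with $G=\varphi_2\circ F\circ\varphi_1$. Let $F_\varphi:=F|_{\mathrm{im}\,\varphi_1}:\mathrm{im}\,\varphi_1\to\mathrm{im}\,F$, $\varphi_F:=\varphi_2|_{\mathrm{im}\,F}:\mathrm{im}\,F\to\mathrm{im}\,\varphi_2$, and $\varphi_*:=\varphi_2|_{\mathrm{im}\,F_\varphi}:\mathrm{im}\,F_\varphi\to\mathrm{im}\,\varphi_F$ (so $\mathrm{im}\,\varphi_*=\mathrm{im}\,G$). Define the matchings \[\mathcal{M}_\varphi:=\mathcal{J}_{F_\varphi}\circ\overline{\mathcal{Q}_{\varphi_*}}:\mathcal{B}_G\nrightarrow\mathcal{B}_F,\qquad \mathcal{E}_\varphi:=\overline{\mathcal{J}_{\varphi_*}}\circ\mathcal{Q}_{\varphi_F}:\mathcal{B}_F\nrightarrow\mathcal{B}_G.\] Then $\mathcal{M}_\varphi$ and $\overline{\mathcal{E}_\varphi}$ are injective sub-barcode matchings $\mathcal{B}_G\nrightarrow\mathcal{B}_F$.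
   Context: Persistence modules, p.f.d., intervals (nonempty convex subsets of $\mathbf{T}$), barcodes $\mathcal{B}_\mathbb{V}:\mathrm{Rep}(\mathcal{B}_\mathbb{V})\to\mathcal{I}_{\mathbf{T}}$ of p.f.d. modules (from the interval decomposition $\mathbb{V}\cong\bigoplus_\beta\Bbbk_{\mathcal{B}_\mathbb{V}(\beta)}$), and $\mathcal{B}_H:=\mathcal{B}_{\mathrm{im}\,H}$ for a homomorphism $H$, are as usual. A matching is a relation in which each element is related to at most one element; a barcode matching $M:\mathcal{A}\nrightarrow\mathcal{B}$ is a matching $M\subseteq\mathrm{Rep}(\mathcal{A})\times\mathrm{Rep}(\mathcal{B})$ with $\mathcal{A}(\alpha)\cap\mathcal{B}(\beta)\neq\emptyset$ for matched pairs. Composition of barcode matchings is $N\circ M=\{(\alpha,\gamma):\exists\beta,(\alpha,\beta)\in M,(\beta,\gamma)\in N,\ \mathcal{A}(\alpha)\cap\mathcal{C}(\gamma)\neq\emptyset\}$. The reverse of a relation $R$ is $\overline{R}=\{(b,a):(a,b)\in R\}$. A matching is injective if every bar of the domain is matched; a sub-barcode matching satisfies $\mathcal{A}(\alpha)\subseteq\mathcal{B}(\beta)$ for all matched pairs. For a homomorphism $H$ with epi–mono factorization $\mathrm{dom}\,H\xrightarrow{q_H}\mathrm{im}\,H\xrightarrow{j_H}\mathrm{cod}\,H$, $\mathcal{J}_H$ and $\mathcal{Q}_H$ denote the Bauer–Lesnick induced matchings of $j_H$ and $q_H$: for a monomorphism $m:\mathbb{X}\hookrightarrow\mathbb{Y}$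 of p.f.d. $\mathbf{T}$-modules, $\mathcal{J}(m):\mathcal{B}_\mathbb{X}\nrightarrow\mathcal{B}_\mathbb{Y}$ is obtained by grouping bars according to the upper end of their interval, ordering the bars with a given upper end in each barcode by decreasing interval (by inclusion), and matching the $i$-th bar of $\mathcal{B}_\mathbb{X}$ to the $i$-th bar of $\mathcal{B}_\mathbb{Y}$; dually, for an epimorphism $e:\mathbb{X}\twoheadrightarrow\mathbb{Y}$, $\mathcal{Q}(e)$ groups bars by lower end, orders by decreasing interval, and matches $i$-th to $i$-th. These are canonical (depending only on the existence of the mono/epi), $\mathcal{J}(m)$ is injective with $\mathcal{B}_\mathbb{X}(\alpha)\subseteq\mathcal{B}_\mathbb{Y}(\beta)$ for matched pairs, and $\mathcal{Q}(e)$ is coinjective (every bar of $\mathcal{B}_\mathbb{Y}$ matched) with $\mathcal{B}_\mathbb{X}(\alpha)\supseteq\mathcal{B}_\mathbb{Y}(\beta)$ for matched pairs. *)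

(* Defs.v *)
From HB Require Import structures.
From mathcomp Require Import all_boot all_order all_algebra.
Set Implicit Arguments. Unset Strict Implicit. Unset Printing Implicit Defensive.
Import Order.TTheory GRing.Theory.
Local Open Scope ring_scope.

(* Each space is a finite-dimensional K-vector space (vectType), so    *)
(* every module here is pointwise finite-dimensional (p.f.d.).         *)
(* The structure maps pm_map s t are only meaningful for s <= t.       *)
Record pmod (d : Order.disp_t) (T : orderType d) (K : fieldType) := PMod {
  pm_sp : T -> vectType K;
  pm_map : forall s t : T, 'Hom(pm_sp s, pm_sp t)
}.

Definition is_pmod d (T : orderType d) (K : fieldType) (M : pmod T K) : Prop :=
  (forall t, pm_map M t t = \1%VF) /\
  (forall s t u, (s <= t)%O -> (t <= u)%O ->
     pm_map M s u = (pm_map M t u \o pm_map M s t)%VF).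

Definition phom d (T : orderType d) (K : fieldType) (M N : pmod T K) :=
  forall t : T, 'Hom(pm_sp M t, pm_sp N t).

Definition is_phom d (T : orderType d) (K : fieldType) (M N : pmod T K)
  (f : phom M N) : Prop :=
  forall s t, (s <= t)%O ->
    (f t \o pm_map M s t)%VF = (pm_map N s t \o f s)%VF.

Definition is_interval d (T : orderType d) (I : T -> Prop) : Prop :=
  (exists t, I t) /\
  (forall s t u, (s <= t)%O -> (t <= u)%O -> I s -> I u -> I t).

(* [is_barcode_of M S B] : the submodule S of M (given pointwise by subspaces)
   has the interval decomposition S ~= (+)_b K_{B b}, with B : R -> intervals.
   The isomorphism is given by the images x b t of the generators of the
   interval modules K_{B b}: they are natural (map to the next generator
   inside the interval, to 0 when leaving it) and, at each t, the x b t with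
   t in B b form a basis of S t (in particular only finitely many bars
   contain t). *)
Definition is_barcode_of d (T : orderType d) (K : fieldType) (M : pmod T K)
  (S : forall t : T, {vspace pm_sp M t}) (R : Type) (B : R -> T -> Prop) : Prop :=
  (forall b, is_interval (B b)) /\
  exists x : forall (b : R) (t : T), pm_sp M t,
    (forall b s t, (s <= t)%O -> B b s -> B b t -> pm_map M s t (x b s) = x b t) /\
    (forall b s t, (s <= t)%O -> B b s -> ~ B b t -> pm_map M s t (x b s) = 0) /\
    (forall t, exists n (e : 'I_n -> R),
        injective e /\ (forall b, B b t <-> exists i, e i = b) /\
        basis_of (S t) [seq x (e i) t | i <- enum 'I_n]).

Definition pim d (T : orderType d) (K : fieldType) (M N : pmod T K) (H : phom M N) :
  forall t : T, {vspace pm_sp N t} := fun t => limg (H t).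

Definition same_upper d (T : orderType d) (I J : T -> Prop) : Prop :=
  forall t, (exists i, I i /\ (t <= i)%O) <-> (exists j, J j /\ (t <= j)%O).
Definition same_lower d (T : orderType d) (I J : T -> Prop) : Prop :=
  forall t, (exists i, I i /\ (i <= t)%O) <-> (exists j, J j /\ (j <= t)%O).

Definition strict_sub d (T : orderType d) (I J : T -> Prop) : Prop :=
  (forall t, I t -> J t) /\ ~ (forall t, J t -> I t).

(* [ranking grp B rk]: rk a is the position (0-based) of bar a in the list of
   bars of its group (bars with the same end, as given by grp), ordered by
   decreasing interval (ties between equal intervals broken arbitrarily). *)
Definition ranking d (T : orderType d) (grp : (T -> Prop) -> (T -> Prop) -> Prop)
  (R : Type) (B : R -> T -> Prop) (rk : R -> nat) : Prop :=
  (forall a a', grp (B a) (B a') -> rk a = rk a' -> a = a') /\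
  (forall a a', grp (B a) (B a') -> strict_sub (B a') (B a) -> (rk a < rk a')%N) /\
  (forall a m, (m < rk a)%N -> exists a', grp (B a) (B a') /\ rk a' = m).

Definition up_ranking d (T : orderType d) := @ranking d T (@same_upper d T).
Definition low_ranking d (T : orderType d) := @ranking d T (@same_lower d T).

(* Bauer--Lesnick induced matching of a monomorphism X -> Y: match the i-th
   bars (for the up-rankings) with the same upper end. *)
Definition BL_mono d (T : orderType d) (RX RY : Type)
  (BX : RX -> T -> Prop) (rkX : RX -> nat) (BY : RY -> T -> Prop) (rkY : RY -> nat)
  : RX -> RY -> Prop :=
  fun a b => same_upper (BX a) (BY b) /\ rkX a = rkY b.

(* Bauer--Lesnick induced matching of an epimorphism X -> Y: same with lower ends. *)
Definition BL_epi d (T : orderType d) (RX RY : Type)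
  (BX : RX -> T -> Prop) (rkX : RX -> nat) (BY : RY -> T -> Prop) (rkY : RY -> nat)
  : RX -> RY -> Prop :=
  fun a b => same_lower (BX a) (BY b) /\ rkX a = rkY b.

Definition rev_rel (A B : Type) (M : A -> B -> Prop) : B -> A -> Prop :=
  fun b a => M a b.

Definition bm_comp d (T : orderType d) (RA RB RC : Type)
  (A : RA -> T -> Prop) (C : RC -> T -> Prop)
  (N : RB -> RC -> Prop) (M : RA -> RB -> Prop) : RA -> RC -> Prop :=
  fun a c => (exists b, M a b /\ N b c) /\ (exists t, A a t /\ C c t).

Definition is_matching (A B : Type) (M : A -> B -> Prop) : Prop :=
  (forall a b b', M a b -> M a b' -> b = b') /\
  (forall a a' b, M a b -> M a' b -> a = a').

Definition barcode_matching d (T : orderType d) (RA RB : Type)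
  (A : RA -> T -> Prop) (B : RB -> T -> Prop) (M : RA -> RB -> Prop) : Prop :=
  is_matching M /\ (forall a b, M a b -> exists t, A a t /\ B b t).

Definition inj_sub_barcode_matching d (T : orderType d) (RA RB : Type)
  (A : RA -> T -> Prop) (B : RB -> T -> Prop) (M : RA -> RB -> Prop) : Prop :=
  barcode_matching A B M /\
  (forall a, exists b, M a b) /\
  (forall a b, M a b -> forall t, A a t -> B b t).

(* Main.v *)
Require Import Defs.
From HB Require Import structures.
From mathcomp Require Import all_boot all_order all_algebra.
From mathcomp Require Import boolp zify.
From Stdlib Require Import Classical.
Set Implicit Arguments. Unset Strict Implicit. Unset Printing Implicit Defensive.
Import Order.TTheory GRing.Theory.
Section LinAlg.
Variables (K : fieldType) (vT : vectType K).

Lemma free_sub (s1 s2 : seq vT) : uniq s1 -> {subset s1 <= s2} -> free s2 -> free s1.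
Proof.
move=> u1 sub f2.
have u2 := free_uniq f2.
have P : perm_eq s2 (s1 ++ [seq x <- s2 | x \notin s1]).
  apply: uniq_perm => //.
    rewrite cat_uniq u1 filter_uniq // andbT.
    by apply/hasPn => x; rewrite mem_filter => /andP[].
  move=> x; rewrite mem_cat mem_filter.
  by case: (boolP (x \in s1)) => /= h; [rewrite (sub x h)|].
by rewrite (perm_free P) in f2; exact: catl_free f2.
Qed.

Lemma free_subseq (s1 s2 : seq vT) : subseq s1 s2 -> free s2 -> free s1.
Proof.
move=> ss f2; apply: (free_sub _ (mem_subseq ss) f2).
exact: subseq_uniq ss (free_uniq f2).
Qed.

Lemma dim_free (s : seq vT) : free s -> \dim <<s>> = size s.
Proof. by move/eqP. Qed.

Lemma dim_img_le (wT : vectType K) (f : 'Hom(vT, wT)) (A B : {vspace vT}) :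
  (B <= A)%VS -> (\dim (f @: A) + \dim B <= \dim A + \dim (f @: B))%N.
Proof.
move=> BA.
have hA := limg_ker_dim f A; have hB := limg_ker_dim f B.
have : (\dim (B :&: lker f) <= \dim (A :&: lker f))%N.
  by apply: dimvS; apply: capvS.
lia.
Qed.

Lemma dim_cap_le (S A B : {vspace vT}) :
  (B <= A)%VS -> (\dim (S :&: A) + \dim B <= \dim A + \dim (S :&: B))%N.
Proof.
move=> BA.
have h := dimv_sum_cap (S :&: A) B.
have h1 : (\dim (S :&: A + B) <= \dim A)%N.
  by apply: dimvS; rewrite subv_add capvSr BA.
have h2 : (\dim (S :&: A :&: B) <= \dim (S :&: B))%N.
  by apply: dimvS; apply: capvS => //; apply: capvSl.
lia.
Qed.
End LinAlg.

Section OrderStuff.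
Variables (d : Order.disp_t) (T : orderType d).
Local Open Scope order_scope.

Definition memo (I : T -> Prop) (o : option T) : Prop :=
  if o is Some s then I s else False.
Definition upS (I : T -> Prop) s := exists i, I i /\ i <= s.
Definition dnS (I : T -> Prop) s := exists i, I i /\ s <= i.

Lemma conv (I : T -> Prop) s t u : is_interval I -> s <= t -> t <= u -> I s -> I u -> I t.
Proof. by case=> _ h; apply: h. Qed.

Lemma cmp_lower (I J : T -> Prop) t : is_interval I -> is_interval J ->
  same_lower I J -> I t -> ~ J t -> strict_sub J I.
Proof.
move=> iI iJ sl It nJt; split; last by move=> h; apply: nJt; apply: h.
move=> u Ju; case: (leP u t) => [ut|tu].
  have [i [Ii iu]] : upS I u by apply/(sl u); exists u.
  exact: (conv iI iu ut Ii It).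
have [j [Jj jt]] : upS J t by apply/(sl t); exists t.
by exfalso; apply: nJt; apply: (conv iJ jt (ltW tu) Jj Ju).
Qed.

Lemma cmp_upper (I J : T -> Prop) t : is_interval I -> is_interval J ->
  same_upper I J -> I t -> ~ J t -> strict_sub J I.
Proof.
move=> iI iJ sl It nJt; split; last by move=> h; apply: nJt; apply: h.
move=> u Ju; case: (leP t u) => [tu|ut].
  have [i [Ii iu]] : dnS I u by apply/(sl u); exists u.
  exact: (conv iI tu iu It Ii).
have [j [Jj jt]] : dnS J t by apply/(sl t); exists t.
by exfalso; apply: nJt; apply: (conv iJ (ltW ut) jt Ju Jj).
Qed.

Lemma below_up (I0 : T -> Prop) s s2 : ~ upS I0 s -> upS I0 s2 -> s <= s2.
Proof.
move=> ns [i [Ii is2]]; case: (leP s2 s) => [h|h]; last exact: ltW.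
by exfalso; apply: ns; exists i; split => //; apply: le_trans h.
Qed.

Lemma above_dn (I0 : T -> Prop) s s2 : ~ dnS I0 s -> dnS I0 s2 -> s2 <= s.
Proof.
move=> ns [i [Ii is2]]; case: (leP s s2) => [h|h]; last exact: ltW.
by exfalso; apply: ns; exists i; split => //; apply: le_trans is2.
Qed.

Lemma choose_lower (X : eqType) (g : X -> T -> Prop) (I0 : T -> Prop) t (ht : I0 t)
  (l : seq X) : (forall x, x \in l -> is_interval (g x) /\ g x t) ->
  exists s2 (s1 : option T), s2 <= t /\ upS I0 s2 /\
    (forall s, s1 = Some s -> ~ upS I0 s) /\
    (forall x, x \in l -> ~ same_lower (g x) I0 -> ~ g x s2 \/ memo (g x) s1).
Proof.
elim: l => [|y l IH] H.
  exists t, None; split => //; split; first by exists t.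
  by split.
have [s2 [s1 [s2t [us2 [hs1 hl]]]]] :
    exists s2 (s1 : option T), s2 <= t /\ upS I0 s2 /\
    (forall s, s1 = Some s -> ~ upS I0 s) /\
    (forall x, x \in l -> ~ same_lower (g x) I0 -> ~ g x s2 \/ memo (g x) s1).
  by apply: IH => x xl; apply: H; rewrite in_cons xl orbT.
have [iy yt] := H y (mem_head _ _).
have Hl x : x \in l -> is_interval (g x) /\ g x t.
  by move=> xl; apply: H; rewrite in_cons xl orbT.
case: (classic (same_lower (g y) I0)) => hs.
  exists s2, s1; do 3!(split => //).
  move=> x; rewrite in_cons => /orP[/eqP -> //|xl]; exact: hl.
have [[w [uw nw]]|[v [yv nv]]] :
    (exists w, upS I0 w /\ ~ upS (g y) w) \/ (exists v, g y v /\ ~ upS I0 v).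
  apply: NNPP => nh; apply: hs => w; split.
    move=> [v [yv vw]]; apply: NNPP => nI; apply: nh; right; exists v; split => //.
    by move=> [i [Ii iv]]; apply: nI; exists i; split => //; apply: le_trans vw.
  by move=> uw; apply: NNPP => nI; apply: nh; left; exists w.
- case: (leP s2 w) => [s2w|ws2].
    exists s2, s1; do 3!(split => //).
    move=> x; rewrite in_cons => /orP[/eqP -> _|xl]; last exact: hl.
    by left => ys2; apply: nw; exists s2.
  exists w, s1; split; first exact: le_trans (ltW ws2) s2t.
  do 2!(split => //).
  move=> x; rewrite in_cons => /orP[/eqP -> _|xl nx].
    by left => yw; apply: nw; exists w.
  case: (hl x xl nx) => [nx2|]; last by right.
  left => xw; apply: nx2; have [ix xt] := Hl x xl.
  exact: (conv ix (ltW ws2) s2t xw xt).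
- have vs2 := below_up nv us2.
  case: s1 hs1 hl => [s|] hs1 hl; last first.
    exists s2, (Some v); do 2!(split => //).
    split; first by move=> s [<-].
    move=> x; rewrite in_cons => /orP[/eqP -> _|xl nx]; first by right.
    by case: (hl x xl nx) => [h|//]; left.
  have ss2 := below_up (hs1 s erefl) us2.
  case: (leP v s) => [vs|sv].
    exists s2, (Some s); do 3!(split => //).
    move=> x; rewrite in_cons => /orP[/eqP -> _|xl]; last exact: hl.
    right => /=; exact: (conv iy vs (le_trans ss2 s2t) yv yt).
  exists s2, (Some v); do 2!(split => //).
  split; first by move=> s' [<-].
  move=> x; rewrite in_cons => /orP[/eqP -> _|xl nx]; first by right.
  case: (hl x xl nx) => [h|/= xs]; first by left.
  right => /=; have [ix xt] := Hl x xl.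
  exact: (conv ix (ltW sv) (le_trans vs2 s2t) xs xt).
Qed.

Lemma choose_upper (X : eqType) (g : X -> T -> Prop) (I0 : T -> Prop) t (ht : I0 t)
  (l : seq X) : (forall x, x \in l -> is_interval (g x) /\ g x t) ->
  exists s2 (s1 : option T), t <= s2 /\ dnS I0 s2 /\
    (forall s, s1 = Some s -> ~ dnS I0 s) /\
    (forall x, x \in l -> ~ same_upper (g x) I0 -> ~ g x s2 \/ memo (g x) s1).
Proof.
elim: l => [|y l IH] H.
  exists t, None; split => //; split; first by exists t.
  by split.
have [s2 [s1 [s2t [us2 [hs1 hl]]]]] :
    exists s2 (s1 : option T), t <= s2 /\ dnS I0 s2 /\
    (forall s, s1 = Some s -> ~ dnS I0 s) /\
    (forall x, x \in l -> ~ same_upper (g x) I0 -> ~ g x s2 \/ memo (g x) s1).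
  by apply: IH => x xl; apply: H; rewrite in_cons xl orbT.
have [iy yt] := H y (mem_head _ _).
have Hl x : x \in l -> is_interval (g x) /\ g x t.
  by move=> xl; apply: H; rewrite in_cons xl orbT.
case: (classic (same_upper (g y) I0)) => hs.
  exists s2, s1; do 3!(split => //).
  move=> x; rewrite in_cons => /orP[/eqP -> //|xl]; exact: hl.
have [[w [uw nw]]|[v [yv nv]]] :
    (exists w, dnS I0 w /\ ~ dnS (g y) w) \/ (exists v, g y v /\ ~ dnS I0 v).
  apply: NNPP => nh; apply: hs => w; split.
    move=> [v [yv vw]]; apply: NNPP => nI; apply: nh; right; exists v; split => //.
    by move=> [i [Ii iv]]; apply: nI; exists i; split => //; apply: le_trans iv.
  by move=> uw; apply: NNPP => nI; apply: nh; left; exists w.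
- case: (leP w s2) => [s2w|ws2].
    exists s2, s1; do 3!(split => //).
    move=> x; rewrite in_cons => /orP[/eqP -> _|xl]; last exact: hl.
    by left => ys2; apply: nw; exists s2.
  exists w, s1; split; first exact: le_trans s2t (ltW ws2).
  do 2!(split => //).
  move=> x; rewrite in_cons => /orP[/eqP -> _|xl nx].
    by left => yw; apply: nw; exists w.
  case: (hl x xl nx) => [nx2|]; last by right.
  left => xw; apply: nx2; have [ix xt] := Hl x xl.
  exact: (conv ix s2t (ltW ws2) xt xw).
- have vs2 := above_dn nv us2.
  case: s1 hs1 hl => [s|] hs1 hl; last first.
    exists s2, (Some v); do 2!(split => //).
    split; first by move=> s [<-].
    move=> x; rewrite in_cons => /orP[/eqP -> _|xl nx]; first by right.
    by case: (hl x xl nx) => [h|//]; left.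
  have ss2 := above_dn (hs1 s erefl) us2.
  case: (leP s v) => [vs|sv].
    exists s2, (Some s); do 3!(split => //).
    move=> x; rewrite in_cons => /orP[/eqP -> _|xl]; last exact: hl.
    right => /=; exact: (conv iy (le_trans s2t ss2) vs yt yv).
  exists s2, (Some v); do 2!(split => //).
  split; first by move=> s' [<-].
  move=> x; rewrite in_cons => /orP[/eqP -> _|xl nx]; first by right.
  case: (hl x xl nx) => [h|/= xs]; first by left.
  right => /=; have [ix xt] := Hl x xl.
  exact: (conv ix (le_trans s2t vs2) (ltW sv) xt xs).
Qed.

End OrderStuff.

Section Rank.
Variables (d : Order.disp_t) (T : orderType d).
Variable grp : (T -> Prop) -> (T -> Prop) -> Prop.
Hypothesis grp_refl : forall I, grp I I.
Hypothesis grp_sym : forall I J, grp I J -> grp J I.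
Hypothesis grp_trans : forall I J L, grp I J -> grp J L -> grp I L.
Hypothesis grp_cmp : forall (I J : T -> Prop) t, is_interval I -> is_interval J ->
  grp I J -> I t -> ~ J t -> strict_sub J I.
Variables (R : Type) (B : R -> T -> Prop) (rk : R -> nat).
Hypothesis hr : ranking grp B rk.
Hypothesis hB : forall b, is_interval (B b).

Lemma small_side n (e : 'I_n -> R) t (he : forall b, B b t <-> exists i, e i = b)
  a (hat : B a t) :
  ((rk a).+1 <= #|[pred i | `[< grp (B (e i)) (B a) >] ]|)%N.
Proof.
case: hr => [r1 [r2 r3]].
have H : forall m : 'I_(rk a).+1, exists i : 'I_n,
    grp (B (e i)) (B a) /\ rk (e i) = m.
  move=> m; have := ltn_ord m; rewrite ltnS leq_eqVlt => /orP[/eqP mE|mlt].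
    have [i ei] := (he a).1 hat; exists i; by rewrite ei mE.
  have [a' [ga' ra']] := r3 a m mlt.
  have a't : B a' t.
    apply: NNPP => na'; have := r2 a a' ga' (grp_cmp (hB a) (hB a') ga' hat na').
    by rewrite ra' ltnNge (ltnW mlt).
  have [i ei] := (he a').1 a't; exists i; rewrite ei; split => //; exact: grp_sym.
have [g Hg] := fin_all_exists H.
have ginj : injective g.
  move=> m1 m2 h; apply: val_inj => /=.
  by rewrite -(Hg m1).2 -(Hg m2).2 h.
rewrite -{1}(card_ord (rk a).+1) -(card_image ginj 'I_(rk a).+1).
apply: subset_leq_card; apply/subsetP => i /imageP [m _ ->].
by rewrite inE; apply/asboolP; exact: (Hg m).1.
Qed.

Lemma big_side n (e : 'I_n -> R) (einj : injective e) t
  (he : forall b, B b t <-> exists i, e i = b) (I0 : T -> Prop) k :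
  (k.+1 <= #|[pred i | `[< grp (B (e i)) I0 >] ]|)%N ->
  exists c, grp (B c) I0 /\ rk c = k /\ B c t.
Proof.
case: hr => [r1 [r2 r3]] hk.
set A := [pred i | _] in hk.
have [i0 i0A] : exists i, i \in A by apply/card_gt0P; apply: leq_trans hk.
case: (arg_maxnP (fun i => rk (e i)) i0A) => im Aim Hmax.
have gim : grp (B (e im)) I0 by move: Aim; rewrite /A ?inE /= => /asboolP.
have cardA : (#|A| <= (rk (e im)).+1)%N.
  pose h (i : 'I_n) : 'I_(rk (e im)).+1 := inord (rk (e i)).
  rewrite -[X in (_ <= X)%N](card_ord (rk (e im)).+1).
  apply: (@leq_card_in _ _ h) => i j iA jA hij.
  have gi : grp (B (e i)) I0 by move: iA; rewrite inE => /asboolP.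
  have gj : grp (B (e j)) I0 by move: jA; rewrite inE => /asboolP.
  have : rk (e i) = rk (e j).
    move: hij => /(congr1 val) /=; rewrite !inordK // ltnS.
      exact: Hmax.
    exact: Hmax.
  by move=> /(r1 _ _ (grp_trans gi (grp_sym gj))) /einj.
have : (k <= rk (e im))%N by rewrite -ltnS; apply: leq_trans hk cardA.
rewrite leq_eqVlt => /orP[/eqP kE|klt].
  exists (e im); split => //; split => //; apply/(he (e im)); by exists im.
have [a' [ga' ra']] := r3 _ k klt.
have imt : B (e im) t by apply/(he (e im)); exists im.
have a't : B a' t.
  apply: NNPP => na'; have := r2 _ a' ga' (grp_cmp (hB _) (hB a') ga' imt na').
  by rewrite ra' ltnNge (ltnW klt).
exists a'; split => //; exact: grp_trans (grp_sym ga') gim.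
Qed.

End Rank.

Section Spans.
Variables (d : Order.disp_t) (T : orderType d) (K : fieldType) (M : pmod T K).
Variables (S : forall t, {vspace pm_sp M t}) (R : Type) (B : R -> T -> Prop).
Variable x : forall (b : R) (t : T), pm_sp M t.
Hypothesis hx1 : forall b s t, (s <= t)%O -> B b s -> B b t -> pm_map M s t (x b s) = x b t.
Hypothesis hx2 : forall b s t, (s <= t)%O -> B b s -> ~ B b t -> pm_map M s t (x b s) = 0%R.
Hypothesis hen : forall t, exists n (e : 'I_n -> R),
   injective e /\ (forall b, B b t <-> exists i, e i = b) /\
   basis_of (S t) [seq x (e i) t | i <- enum 'I_n].

Definition sp t n (e : 'I_n -> R) (P : pred 'I_n) : {vspace pm_sp M t} :=
  <<[seq x (e i) t | i <- enum 'I_n & P i]>>%VS.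

Lemma card_count n (P : pred 'I_n) : count P (enum 'I_n) = #|P|.
Proof. by rewrite cardE -size_filter enumT. Qed.

Lemma dim_sp t n (e : 'I_n -> R) P :
  basis_of (S t) [seq x (e i) t | i <- enum 'I_n] -> \dim (sp t e P) = #|P|.
Proof.
move=> hb; rewrite /sp dim_free; first by rewrite size_map size_filter card_count.
apply: free_subseq (basis_free hb).
by apply: map_subseq; apply: filter_subseq.
Qed.

Lemma sp_sub t n (e : 'I_n -> R) P :
  basis_of (S t) [seq x (e i) t | i <- enum 'I_n] -> (sp t e P <= S t)%VS.
Proof.
move=> hb; rewrite -(span_basis hb); apply: sub_span => v /mapP [i].
by rewrite mem_filter => /andP [_ ie] ->; apply: map_f.
Qed.

Lemma sp_mono t n (e : 'I_n -> R) (P Q : pred 'I_n) :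
  (forall i, P i -> Q i) -> (sp t e P <= sp t e Q)%VS.
Proof.
move=> PQ; apply: sub_span => v /mapP [i].
rewrite mem_filter => /andP [Pi ie] ->; apply: map_f.
by rewrite mem_filter ie PQ.
Qed.

Lemma img_sp s t (st : (s <= t)%O) n (e : 'I_n -> R)
  (he : forall b, B b t <-> exists i, e i = b) :
  (pm_map M s t @: S s)%VS = sp t e [pred i | `[< B (e i) s >] ].
Proof.
have [ns [es [esinj [hes hbs]]]] := hen s.
rewrite -(span_basis hbs) limg_span; apply/eqP; rewrite eqEsubv; apply/andP; split;
  apply/span_subvP => v.
  move=> /mapP [y /mapP [j _ ->] ->].
  have Bs : B (es j) s by apply/hes; exists j.
  case: (classic (B (es j) t)) => Bt; last by rewrite hx2 // mem0v.
  rewrite hx1 //; have [i ei] := (he _).1 Bt.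
  apply: memv_span; apply/mapP; exists i; last by rewrite ei.
  by rewrite mem_filter mem_enum andbT inE; apply/asboolP; rewrite ei.
move=> /mapP [i]; rewrite mem_filter mem_enum andbT inE => /asboolP Bs ->.
have [j ej] := (hes _).1 Bs.
have Bt : B (e i) t by apply/he; exists i.
rewrite -(@hx1 (e i) s t st Bs Bt) -ej; apply: memv_span; apply: map_f; apply: map_f.
exact: mem_enum.
Qed.

Definition Iopt t (o : option T) : {vspace pm_sp M t} :=
  if o is Some s then (pm_map M s t @: S s)%VS else 0%VS.

Lemma img_sp_opt t (o : option T) (ho : if o is Some s then (s <= t)%O else true)
  n (e : 'I_n -> R) (he : forall b, B b t <-> exists i, e i = b) :
  Iopt t o = sp t e [pred i | `[< memo (B (e i)) o >] ].
Proof.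
case: o ho => [s st|_] /=; first exact: img_sp.
rewrite /sp; apply/esym; apply/eqP; rewrite -subv0; apply/span_subvP => v /mapP [i].
by rewrite mem_filter inE => /andP [/asboolP].
Qed.

Lemma ker_sp t u (tu : (t <= u)%O) n (e : 'I_n -> R) (einj : injective e)
  (he : forall b, B b t <-> exists i, e i = b)
  (hb : basis_of (S t) [seq x (e i) t | i <- enum 'I_n]) :
  sp t e [pred i | `[< ~ B (e i) u >] ] = (S t :&: lker (pm_map M t u))%VS.
Proof.
have [nu [eu [euinj [heu hbu]]]] := hen u.
set P := [pred i | _]; set Q := [pred i : 'I_n | `[< B (e i) u >] ].
have sub : (sp t e P <= S t :&: lker (pm_map M t u))%VS.
  apply/span_subvP => v /mapP [i]; rewrite mem_filter inE => /andP [/asboolP nBu ie] ->.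
  rewrite memv_cap; apply/andP; split.
    by apply: (basis_mem hb); apply: map_f.
  rewrite memv_ker hx2 //; by apply/he; exists i.
apply/eqP; rewrite eqEdim sub /=.
have dS : \dim (S t) = n.
  by rewrite -(span_basis hb) dim_free ?(basis_free hb) // size_map size_enum_ord.
have hk := limg_ker_dim (pm_map M t u) (S t).
have PQ : (#|P| + #|Q| = n)%N.
  rewrite -[n in RHS](card_ord n) -(cardC Q) addnC; congr (_ + _)%N.
  apply: eq_card => i; rewrite !inE.
  by case: (asboolP (B (e i) u)) => h; [apply/asboolP|apply/asboolP].
have dQ : (#|Q| <= \dim (pm_map M t u @: S t))%N.
  apply: (@leq_trans (\dim (pm_map M t u @: sp t e Q))); last first.
    by apply: dimvS; apply: limgS; apply: sp_sub.
  rewrite /sp limg_span -map_comp.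
  have -> : [seq (pm_map M t u \o (fun i => x (e i) t)) i | i <- enum 'I_n & Q i]
      = [seq x (e i) u | i <- enum 'I_n & Q i].
    apply/eq_in_map => i; rewrite mem_filter inE => /andP [/asboolP Bu _] /=.
    by apply: hx1 => //; apply/he; exists i.
  rewrite dim_free ?size_map ?size_filter ?card_count //.
  apply: (free_sub _ _ (basis_free hbu)).
    rewrite map_inj_in_uniq; first by apply: filter_uniq; apply: enum_uniq.
    move=> i i'; rewrite !mem_filter !inE => /andP [/asboolP Bi _] /andP [/asboolP Bi' _] h.
    have [j ej] := (heu _).1 Bi; have [j' ej'] := (heu _).1 Bi'.
    have := free_uniq (basis_free hbu).
    move=> /(@injectiveP _ _ (fun j => x (eu j) u)) inj.
    apply: einj; rewrite -ej -ej'; congr eu; apply: inj => /=.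
    by rewrite ej ej'.
  move=> v /mapP [i]; rewrite mem_filter inE => /andP [/asboolP Bi _] ->.
  have [j ej] := (heu _).1 Bi; rewrite -ej; apply: map_f; exact: mem_enum.
rewrite dim_sp //.
have h1 : (\dim (S t :&: lker (pm_map M t u)) + #|Q| <= \dim (S t))%N.
  by rewrite -hk leq_add2l.
rewrite -(leq_add2r #|Q|) PQ; apply: leq_trans h1 _; by rewrite dS.
Qed.

Definition Kopt t (o : option T) : {vspace pm_sp M t} :=
  if o is Some u then lker (pm_map M t u) else fullv.

Lemma ker_sp_opt t (o : option T) (ho : if o is Some u then (t <= u)%O else true)
  n (e : 'I_n -> R) (einj : injective e)
  (he : forall b, B b t <-> exists i, e i = b)
  (hb : basis_of (S t) [seq x (e i) t | i <- enum 'I_n]) :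
  sp t e [pred i | `[< ~ memo (B (e i)) o >] ] = (S t :&: Kopt t o)%VS.
Proof.
case: o ho => [u tu|_] /=; first exact: ker_sp.
rewrite capvf -(span_basis hb) /sp; congr (<< _ >>)%VS.
rewrite (@eq_filter _ _ predT); first by rewrite filter_predT.
by move=> i; rewrite inE; apply/asboolP.
Qed.

End Spans.

Lemma count_split n (G A Bp : pred 'I_n) :
  (forall i, G i = A i && ~~ Bp i) -> (forall i, Bp i -> A i) ->
  (#|G| + #|Bp| = #|A|)%N.
Proof.
move=> hG hBA; rewrite -(cardID Bp A) addnC; congr (_ + _)%N;
  apply: eq_card => i; rewrite !inE /in_mem /= ?hG;
  case: (Bp i) (hBA i); case: (A i) => //=; by move=> /(_ isT).
Qed.

Lemma asbool_andn (P Q R : Prop) : (P <-> Q /\ ~ R) -> `[< P >] = `[< Q >] && ~~ `[< R >].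
Proof.
move=> h; case: (asboolP P) => p; case: (asboolP Q) => q; case: (asboolP R) => r //=;
  exfalso; tauto.
Qed.

Section Match.
Variables (d : Order.disp_t) (T : orderType d) (K : fieldType).

Lemma sl_refl (I : T -> Prop) : same_lower I I. Proof. by []. Qed.
Lemma sl_sym (I J : T -> Prop) : same_lower I J -> same_lower J I.
Proof. by move=> h t; apply: iff_sym. Qed.
Lemma sl_trans (I J L : T -> Prop) : same_lower I J -> same_lower J L -> same_lower I L.
Proof. by move=> h1 h2 t; apply: iff_trans (h1 t) (h2 t). Qed.
Lemma su_refl (I : T -> Prop) : same_upper I I. Proof. by []. Qed.
Lemma su_sym (I J : T -> Prop) : same_upper I J -> same_upper J I.
Proof. by move=> h t; apply: iff_sym. Qed.
Lemma su_trans (I J L : T -> Prop) : same_upper I J -> same_upper J L -> same_upper I L.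
Proof. by move=> h1 h2 t; apply: iff_trans (h1 t) (h2 t). Qed.

Lemma epi_match (M1 M2 : pmod T K) (S1 : forall t, {vspace pm_sp M1 t})
  (S2 : forall t, {vspace pm_sp M2 t}) (R1 R2 : Type)
  (B1 : R1 -> T -> Prop) (B2 : R2 -> T -> Prop)
  (h1 : is_barcode_of S1 B1) (h2 : is_barcode_of S2 B2)
  (f : phom M1 M2) (hf : is_phom f) (hS : forall t, S2 t = (f t @: S1 t)%VS)
  rk1 rk2 (hr1 : low_ranking B1 rk1) (hr2 : low_ranking B2 rk2) :
  forall a, exists c, same_lower (B1 c) (B2 a) /\ rk1 c = rk2 a /\
    forall t, B2 a t -> B1 c t.
Proof.
case: h1 => hB1 [x1 [x11 [x12 hen1]]].
case: h2 => hB2 [x2 [x21 [x22 hen2]]].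
have key : forall a t, B2 a t ->
    exists c, same_lower (B1 c) (B2 a) /\ rk1 c = rk2 a /\ B1 c t.
  move=> a t at_.
  have [n1 [e1 [e1inj [he1 hb1]]]] := hen1 t.
  have [n2 [e2 [e2inj [he2 hb2]]]] := hen2 t.
  pose g (z : ('I_n1 + 'I_n2)%type) : T -> Prop :=
    match z with inl i => B1 (e1 i) | inr j => B2 (e2 j) end.
  have hg : forall z, z \in enum {: ('I_n1 + 'I_n2)%type} -> is_interval (g z) /\ g z t.
    move=> [i|j] _ /=; split; [exact: hB1| |exact: hB2|].
      by apply/he1; exists i.
    by apply/he2; exists j.
  have [s2 [s1 [s2t [us2 [hs1 hl]]]]] := choose_lower at_ hg.
  have char : forall z, same_lower (g z) (B2 a) <-> g z s2 /\ ~ memo (g z) s1.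
    move=> z; have [iz zt] := hg z (mem_enum _ _); split.
      move=> sl; split.
        have [i [zi is2]] : upS (g z) s2 by apply/(sl s2).
        exact: (conv iz is2 s2t zi zt).
      case: (s1) hs1 => [s|] /= hs zs; last by case: zs. apply: (hs s erefl); apply/(sl s).
      by exists s.
    move=> [zs2 nm]; apply: NNPP => ns.
    by case: (hl z (mem_enum _ _) ns).
  have memo_s2 : forall z, memo (g z) s1 -> g z s2.
    move=> z; have [iz zt] := hg z (mem_enum _ _).
    case: (s1) hs1 => [s|] //= hs zs.
    exact: (conv iz (below_up (hs s erefl) us2) s2t zs zt).
  have hs1t : is_true (if s1 is Some s then (s <= t)%O else true).
    case: (s1) hs1 => [s|] // hs; exact: le_trans (below_up (hs s erefl) us2) s2t.
  pose G1 := [pred i | `[< same_lower (B1 (e1 i)) (B2 a) >] ].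
  pose A1 := [pred i | `[< B1 (e1 i) s2 >] ].
  pose C1 := [pred i | `[< memo (B1 (e1 i)) s1 >] ].
  pose G2 := [pred i | `[< same_lower (B2 (e2 i)) (B2 a) >] ].
  pose A2 := [pred i | `[< B2 (e2 i) s2 >] ].
  pose C2 := [pred i | `[< memo (B2 (e2 i)) s1 >] ].
  have c1 : (#|G1| + #|C1| = #|A1|)%N.
    apply: count_split => i; rewrite !inE.
      exact: asbool_andn (char (inl i)).
    by move=> /asboolP h; apply/asboolP; exact: (memo_s2 (inl i)).
  have c2 : (#|G2| + #|C2| = #|A2|)%N.
    apply: count_split => i; rewrite !inE.
      exact: asbool_andn (char (inr i)).
    by move=> /asboolP h; apply/asboolP; exact: (memo_s2 (inr i)).
  have imgA : (f t @: sp x1 t e1 A1)%VS = sp x2 t e2 A2.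
    rewrite -(img_sp x11 x12 hen1 s2t he1) -(img_sp x21 x22 hen2 s2t he2).
    by rewrite -limg_comp hf // limg_comp hS.
  have imgC : (f t @: sp x1 t e1 C1)%VS = sp x2 t e2 C2.
    rewrite -(img_sp_opt x11 x12 hen1 hs1t he1) -(img_sp_opt x21 x22 hen2 hs1t he2).
    case: (s1) hs1t => [s st|_] /=; last by rewrite limg0.
    by rewrite -limg_comp hf // limg_comp hS.
  have CA : (sp x1 t e1 C1 <= sp x1 t e1 A1)%VS.
    apply: sp_mono => i; rewrite !inE => /asboolP h; apply/asboolP.
    exact: (memo_s2 (inl i)).
  have := dim_img_le (f t) CA.
  rewrite imgA imgC !(dim_sp _ hb1) !(dim_sp _ hb2) => hle.
  have G21 : (#|G2| <= #|G1|)%N.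
    by move: hle; rewrite -c1 -c2 -!addnA [(#|C2| + #|C1|)%N]addnC leq_add2r.
  have ss := small_side (@sl_refl) (@sl_sym) (@cmp_lower d T) hr2 hB2 he2 at_.
  have [c [gc [rc ct]]] := big_side (@sl_sym) (@sl_trans) (@cmp_lower d T) hr1 hB1 e1inj he1
     (leq_trans ss G21).
  by exists c.
move=> a.
have [[t0 at0] _] := hB2 a.
have [c [gc [rc ct0]]] := key a t0 at0.
exists c; split => //; split => // t at_.
have [c' [gc' [rc' ct]]] := key a t at_.
have -> : c = c' => //.
case: hr1 => r1 _; apply: r1; first exact: sl_trans gc (sl_sym gc').
by rewrite rc rc'.
Qed.

Lemma mono_match (M : pmod T K) (S1 S2 : forall t, {vspace pm_sp M t})
  (hsub : forall t, (S1 t <= S2 t)%VS) (R1 R2 : Type)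
  (B1 : R1 -> T -> Prop) (B2 : R2 -> T -> Prop)
  (h1 : is_barcode_of S1 B1) (h2 : is_barcode_of S2 B2)
  rk1 rk2 (hr1 : up_ranking B1 rk1) (hr2 : up_ranking B2 rk2) :
  forall a, exists c, same_upper (B1 a) (B2 c) /\ rk1 a = rk2 c /\
    forall t, B1 a t -> B2 c t.
Proof.
case: h1 => hB1 [x1 [x11 [x12 hen1]]].
case: h2 => hB2 [x2 [x21 [x22 hen2]]].
have key : forall a t, B1 a t ->
    exists c, same_upper (B2 c) (B1 a) /\ rk2 c = rk1 a /\ B2 c t.
  move=> a t at_.
  have [n1 [e1 [e1inj [he1 hb1]]]] := hen1 t.
  have [n2 [e2 [e2inj [he2 hb2]]]] := hen2 t.
  pose g (z : ('I_n1 + 'I_n2)%type) : T -> Prop :=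
    match z with inl i => B1 (e1 i) | inr j => B2 (e2 j) end.
  have hg : forall z, z \in enum {: ('I_n1 + 'I_n2)%type} -> is_interval (g z) /\ g z t.
    move=> [i|j] _ /=; split; [exact: hB1| |exact: hB2|].
      by apply/he1; exists i.
    by apply/he2; exists j.
  have [u2 [u1 [tu2 [du2 [hu1 hl]]]]] := choose_upper at_ hg.
  have char : forall z, same_upper (g z) (B1 a) <-> ~ memo (g z) u1 /\ ~ ~ g z u2.
    move=> z; have [iz zt] := hg z (mem_enum _ _); split.
      move=> sl; split.
        case: (u1) hu1 => [s|] /= hs zs; last by case: zs. apply: (hs s erefl); apply/(sl s).
        by exists s.
      have [i [zi is2]] : dnS (g z) u2 by apply/(sl u2).
      by move=> h; apply: h; exact: (conv iz tu2 is2 zt zi).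
    move=> [nm zs2]; apply: NNPP => ns.
    by case: (hl z (mem_enum _ _) ns).
  have memo_u2 : forall z, memo (g z) u1 -> g z u2.
    move=> z; have [iz zt] := hg z (mem_enum _ _).
    case: (u1) hu1 => [s|] //= hs zs.
    exact: (conv iz tu2 (above_dn (hs s erefl) du2) zt zs).
  have hu1t : is_true (if u1 is Some s then (t <= s)%O else true).
    case: (u1) hu1 => [s|] // hs; exact: le_trans tu2 (above_dn (hs s erefl) du2).
  pose G1 := [pred i | `[< same_upper (B1 (e1 i)) (B1 a) >] ].
  pose A1 := [pred i | `[< ~ memo (B1 (e1 i)) u1 >] ].
  pose C1 := [pred i | `[< ~ B1 (e1 i) u2 >] ].
  pose G2 := [pred i | `[< same_upper (B2 (e2 i)) (B1 a) >] ].
  pose A2 := [pred i | `[< ~ memo (B2 (e2 i)) u1 >] ].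
  pose C2 := [pred i | `[< ~ B2 (e2 i) u2 >] ].
  have c1 : (#|G1| + #|C1| = #|A1|)%N.
    apply: count_split => i; rewrite !inE.
      exact: asbool_andn (char (inl i)).
    move=> /asboolP h; apply/asboolP => m; apply: h; exact: (memo_u2 (inl i)).
  have c2 : (#|G2| + #|C2| = #|A2|)%N.
    apply: count_split => i; rewrite !inE.
      exact: asbool_andn (char (inr i)).
    move=> /asboolP h; apply/asboolP => m; apply: h; exact: (memo_u2 (inr i)).
  have spA : sp x1 t e1 A1 = (S1 t :&: sp x2 t e2 A2)%VS.
    rewrite (ker_sp_opt x11 x12 hen1 hu1t e1inj he1 hb1).
    rewrite (ker_sp_opt x21 x22 hen2 hu1t e2inj he2 hb2).
    by rewrite capvA; congr (_ :&: _)%VS; apply/esym/capv_idPl.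
  have spC : sp x1 t e1 C1 = (S1 t :&: sp x2 t e2 C2)%VS.
    rewrite (ker_sp x11 x12 hen1 tu2 e1inj he1 hb1).
    rewrite (ker_sp x21 x22 hen2 tu2 e2inj he2 hb2).
    by rewrite capvA; congr (_ :&: _)%VS; apply/esym/capv_idPl.
  have CA : (sp x2 t e2 C2 <= sp x2 t e2 A2)%VS.
    apply: sp_mono => i; rewrite !inE => /asboolP h; apply/asboolP => m; apply: h.
    exact: (memo_u2 (inr i)).
  have := dim_cap_le (S1 t) CA.
  rewrite -spA -spC !(dim_sp _ hb1) !(dim_sp _ hb2) => hle.
  have G12 : (#|G1| <= #|G2|)%N.
    by move: hle; rewrite -c1 -c2 -!addnA [(#|C1| + #|C2|)%N]addnC leq_add2r.
  have ss := small_side (@su_refl) (@su_sym) (@cmp_upper d T) hr1 hB1 he1 at_.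
  have [c [gc [rc ct]]] := big_side (@su_sym) (@su_trans) (@cmp_upper d T) hr2 hB2 e2inj he2
     (leq_trans ss G12).
  by exists c.
move=> a.
have [[t0 at0] _] := hB1 a.
have [c [gc [rc ct0]]] := key a t0 at0.
exists c; split; first exact: su_sym.
split => // t at_.
have [c' [gc' [rc' ct]]] := key a t at_.
have -> : c = c' => //.
case: hr2 => r1 _; apply: r1; first exact: su_trans gc (su_sym gc').
by rewrite rc rc'.
Qed.

End Match.

Lemma uniq_low d (T : orderType d) (R : Type) (B : R -> T -> Prop) rk
  (hr : low_ranking B rk) (I : T -> Prop) b b' :
  same_lower (B b) I -> same_lower (B b') I -> rk b = rk b' -> b = b'.
Proof. by case: hr => r1 _ h h'; apply: r1; apply: sl_trans h (sl_sym h'). Qed.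

Lemma uniq_up d (T : orderType d) (R : Type) (B : R -> T -> Prop) rk
  (hr : up_ranking B rk) (I : T -> Prop) b b' :
  same_upper (B b) I -> same_upper (B b') I -> rk b = rk b' -> b = b'.
Proof. by case: hr => r1 _ h h'; apply: r1; apply: su_trans h (su_sym h'). Qed.

Theorem lemma3p6 (d : Order.disp_t) (T : orderType d) (K : fieldType)
  (U V T' W : pmod T K)
  (hU : is_pmod U) (hV : is_pmod V) (hT' : is_pmod T') (hW : is_pmod W)
  (F : phom U V) (G : phom T' W) (phi1 : phom T' U) (phi2 : phom V W)
  (hF : is_phom F) (hG : is_phom G) (hphi1 : is_phom phi1) (hphi2 : is_phom phi2)
  (hGeq : forall t, G t = (phi2 t \o F t \o phi1 t)%VF)
  (RG : Type) (BG : RG -> T -> Prop) (hBG : is_barcode_of (pim G) BG)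
  (RF : Type) (BF : RF -> T -> Prop) (hBF : is_barcode_of (pim F) BF)
  (RFp : Type) (BFp : RFp -> T -> Prop)
  (hBFp : is_barcode_of (fun t => (F t @: limg (phi1 t))%VS) BFp)
  (RpF : Type) (BpF : RpF -> T -> Prop)
  (hBpF : is_barcode_of (fun t => (phi2 t @: limg (F t))%VS) BpF)
  (upFp : RFp -> nat) (upF : RF -> nat) (upG : RG -> nat) (uppF : RpF -> nat)
  (lowFp : RFp -> nat) (lowF : RF -> nat) (lowG : RG -> nat) (lowpF : RpF -> nat)
  (hupFp : up_ranking BFp upFp) (hupF : up_ranking BF upF)
  (hupG : up_ranking BG upG) (huppF : up_ranking BpF uppF)
  (hlowFp : low_ranking BFp lowFp) (hlowF : low_ranking BF lowF)
  (hlowG : low_ranking BG lowG) (hlowpF : low_ranking BpF lowpF) :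
  let J_Fphi := BL_mono BFp upFp BF upF in
  let Q_phistar := BL_epi BFp lowFp BG lowG in
  let Q_phiF := BL_epi BF lowF BpF lowpF in
  let J_phistar := BL_mono BG upG BpF uppF in
  let M_phi := bm_comp BG BF J_Fphi (rev_rel Q_phistar) in
  let E_phi := bm_comp BF BG (rev_rel J_phistar) Q_phiF in
  inj_sub_barcode_matching BG BF M_phi /\
  inj_sub_barcode_matching BG BF (rev_rel E_phi).
Proof.
move=> J_Fphi Q_phistar Q_phiF J_phistar M_phi E_phi.
rewrite /M_phi /E_phi /J_Fphi /Q_phistar /Q_phiF /J_phistar /inj_sub_barcode_matching
  /barcode_matching /is_matching /bm_comp /rev_rel /BL_mono /BL_epi.
clear M_phi E_phi J_Fphi Q_phistar Q_phiF J_phistar.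
have hSG : forall t, pim G t = (phi2 t @: (F t @: limg (phi1 t)))%VS.
  by move=> t; rewrite /pim hGeq !limg_comp.
have epi1 := epi_match hBFp hBG hphi2 hSG hlowFp hlowG.
have mono1 := @mono_match _ _ _ _ _ (pim F)
  (fun t => limgS (F t) (subvf (limg (phi1 t)))) _ _ _ _ hBFp hBF _ _ hupFp hupF.
have hsub2 : forall t, (pim G t <= phi2 t @: limg (F t))%VS.
  by move=> t; rewrite hSG; apply: limgS; apply: limgS; apply: subvf.
have mono2 := mono_match hsub2 hBG hBpF hupG huppF.
have epi2 := epi_match hBF hBpF hphi2
  (fun t => erefl (phi2 t @: limg (F t))%VS) hlowF hlowpF.
have det1 : forall a b, same_lower (BFp b) (BG a) -> lowFp b = lowG a ->
    forall t, BG a t -> BFp b t.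
  move=> a b h1 h2; have [b' [h1' [h2' h3']]] := epi1 a.
  by have -> : b = b' by apply: (uniq_low hlowFp h1 h1'); rewrite h2 h2'.
have det2 : forall b c, same_upper (BFp b) (BF c) -> upFp b = upF c ->
    forall t, BFp b t -> BF c t.
  move=> b c h1 h2; have [c' [h1' [h2' h3']]] := mono1 b.
  have -> : c = c' => //.
  by apply: (uniq_up hupF (su_sym h1) (su_sym h1')); rewrite -h2 -h2'.
have det3 : forall a b, same_upper (BG a) (BpF b) -> upG a = uppF b ->
    forall t, BG a t -> BpF b t.
  move=> a b h1 h2; have [b' [h1' [h2' h3']]] := mono2 a.
  have -> : b = b' => //.
  by apply: (uniq_up huppF (su_sym h1) (su_sym h1')); rewrite -h2 -h2'.
have det4 : forall b c, same_lower (BF c) (BpF b) -> lowF c = lowpF b ->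
    forall t, BpF b t -> BF c t.
  move=> b c h1 h2; have [c' [h1' [h2' h3']]] := epi2 b.
  by have -> : c = c' by apply: (uniq_low hlowF h1 h1'); rewrite h2 h2'.
split.
  split; [split; [split|] | split].
  - move=> a c c' [[b [[q1 q2] [j1 j2]]] _] [[b' [[q1' q2'] [j1' j2']]] _].
    have ebb : b = b' by apply: (uniq_low hlowFp q1 q1'); rewrite q2 q2'.
    subst b'; apply: (uniq_up hupF (su_sym j1) (su_sym j1')); by rewrite -j2 -j2'.
  - move=> a a' c [[b [[q1 q2] [j1 j2]]] _] [[b' [[q1' q2'] [j1' j2']]] _].
    have ebb : b = b'.
      by apply: (uniq_up hupFp j1 j1'); rewrite j2 j2'.
    subst b'; apply: (uniq_low hlowG (sl_sym q1) (sl_sym q1')); by rewrite -q2 -q2'.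
  - by move=> a c [_ h].
  - move=> a; have [b [q1 [q2 _]]] := epi1 a; have [c [j1 [j2 _]]] := mono1 b.
    exists c; split; first by exists b.
    have [[t0 at0] _] := hBG.1 a.
    by exists t0; split => //; apply: (det2 b c j1 j2); apply: (det1 a b q1 q2).
  - move=> a c [[b [[q1 q2] [j1 j2]]] _] t at_.
    by apply: (det2 b c j1 j2); apply: (det1 a b q1 q2).
split; [split; [split|] | split].
- move=> a c c' [[b [[q1 q2] [j1 j2]]] _] [[b' [[q1' q2'] [j1' j2']]] _].
  have ebb : b = b'.
    by apply: (uniq_up huppF (su_sym j1) (su_sym j1')); rewrite -j2 -j2'.
  subst b'; apply: (uniq_low hlowF q1 q1'); by rewrite q2 q2'.
- move=> a a' c [[b [[q1 q2] [j1 j2]]] _] [[b' [[q1' q2'] [j1' j2']]] _].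
  have ebb : b = b'.
    by apply: (uniq_low hlowpF (sl_sym q1) (sl_sym q1')); rewrite -q2 -q2'.
  subst b'; apply: (uniq_up hupG j1 j1'); by rewrite j2 j2'.
- by move=> a c [_ [t [h1 h2]]]; exists t.
- move=> a; have [b [j1 [j2 _]]] := mono2 a; have [c [q1 [q2 _]]] := epi2 b.
  exists c; split; first by exists b.
  have [[t0 at0] _] := hBG.1 a.
  by exists t0; split => //; apply: (det4 b c q1 q2); apply: (det3 a b j1 j2).
- move=> a c [[b [[q1 q2] [j1 j2]]] _] t at_.
  by apply: (det4 b c q1 q2); apply: (det3 a b j1 j2).
Qed.
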